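(* Let $X$ be a space and $p\in X$, and let $\{H_n:n\in\omega\}$ be a countable family of subsets of $X$ with $p\in\overline{\bigcup_{n\in\omega}H_n}$. If either (a) $X$ is strongly $L$-selective, or (b) $X$ is $L$-selective and every $H_n$ is closed, then there is a sequence of points of $\bigcup_{n\in\omega}H_n$ converging to $p$.
   Context: All spaces are assumed $T_1$. For spaces $Y$, $X$, a map $\varphi:Y\to\mathcal P(X)\setminus\{\emptyset\}$ is lower semicontinuous (l.s.c.) if $\{y:\varphi(y)\cap U\neq\emptyset\}$ is open in $Y$ for every open $U\subseteq X$; a selection is a map $f:Y\to X$ with $f(y)\in\varphi(y)$ for all $y$. $X$ is strongly $Y$-selective if every l.s.c. map $Y\to\mathcal P(X)\setminus\{\emptyset\}$ has a continuous selection, and $Y$-selective if every l.s.c. map from $Y$ to the nonempty closed subsets of $X$ has a continuous selection. (Strongly) $L$-selective means (strongly) $(\omega+1)$-selective, with $\omega+1$ carrying the order topology. *)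

(* Defs.v *)
From mathcomp Require Import all_boot all_order.
From mathcomp Require Import all_classical all_reals all_analysis.
Set Implicit Arguments. Unset Strict Implicit. Unset Printing Implicit Defensive.
Local Open Scope classical_set_scope.

(* The ordinal omega+1 = {0,1,2,...} ∪ {omega}: [Some n] is n, [None] is omega. *)
Definition omega1 := option nat.

Definition omega1_lt (x y : omega1) : Prop :=
  match x, y with
  | Some m, Some n => (m < n)%N
  | Some _, None => True
  | None, _ => False
  end.

Definition omega1_interval (lo hi : option omega1) : set omega1 :=
  [set z | (match lo with None => True | Some a => omega1_lt a z end) /\
           (match hi with None => True | Some b => omega1_lt z b end)].

Definition omega1_open (U : set omega1) : Prop :=
  forall y, U y -> exists lo hi,
    omega1_interval lo hi y /\ omega1_interval lo hi `<=` U.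

Definition omega1_continuous (X : topologicalType) (f : omega1 -> X) : Prop :=
  forall U : set X, open U -> omega1_open (f @^-1` U).

Definition omega1_lsc (X : topologicalType) (phi : omega1 -> set X) : Prop :=
  forall U : set X, open U -> omega1_open [set y | phi y `&` U !=set0].

Definition strongly_L_selective (X : topologicalType) : Prop :=
  forall phi : omega1 -> set X,
    (forall y, phi y !=set0) -> omega1_lsc phi ->
    exists f : omega1 -> X, (forall y, phi y (f y)) /\ omega1_continuous f.

Definition L_selective (X : topologicalType) : Prop :=
  forall phi : omega1 -> set X,
    (forall y, phi y !=set0) -> (forall y, closed (phi y)) -> omega1_lsc phi ->
    exists f : omega1 -> X, (forall y, phi y (f y)) /\ omega1_continuous f.

(* Main.v *)
Require Import Defs.
From mathcomp Require Import all_boot all_order.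
From mathcomp Require Import all_classical all_reals all_analysis.
Local Open Scope classical_set_scope.

Lemma open_crit (U : set omega1) :
  (U None -> exists N, forall n, (N < n)%N -> U (Some n)) -> omega1_open U.
Proof.
move=> hU [n|] Uy.
  exists (if n is k.+1 then Some (Some k) else None), (Some (Some n.+1)).
  split; first by case: n {Uy} => [|k]; rewrite /omega1_interval /=.
  move=> [m|] /=; last by case: n {Uy} => [|k] [].
  case: n Uy => [|k] Uy [h1 h2].
    by have -> : m = 0%N by case: m h1 h2.
  have -> : m = k.+1; last by [].
  by apply/eqP; rewrite eqn_leq -ltnS h2 h1.
have [N hN] := hU Uy.
exists (Some (Some N)), None; split => //=.
by move=> [m|] /= [h _] //; apply: hN.
Qed.

Lemma cont_seq (X : topologicalType) (f : omega1 -> X) :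
  omega1_continuous f -> (fun n => f (Some n)) @ \oo --> f None.
Proof.
move=> cf U; rewrite nbhsE => -[V [oV Vp] VU].
have [lo [hi [[hlo hhi] sub]]] := cf V oV None Vp.
case: hi hhi sub => [b []|] _ sub.
case: lo hlo sub => [[N|]|] hlo sub; [|by case: hlo|].
  apply: (@ex_intro2 _ _ _ N.+1 I). move=> n /= hn; apply: VU; apply: (sub (Some n)); split => //.
apply: (@ex_intro2 _ _ _ 0%N I). move=> n /= _; apply: VU; apply: (sub (Some n)); split => //.
Qed.

Definition phiG {X : Type} (p : X) (G : nat -> set X) (y : omega1) : set X :=
  match y with Some n => G n | None => [set p] end.

Lemma lsc_phiG (X : topologicalType) (p : X) (H G : nat -> set X) :
  closure (\bigcup_n H n) p ->
  (forall k n, (k <= n)%N -> H k `<=` G n) -> omega1_lsc (phiG p G).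
Proof.
move=> cl hG U oU; apply: open_crit => /= -[x [-> Ux]].
have [y [[k _ Hky] Uy]] := cl U (open_nbhs_nbhs (conj oU Ux)).
by exists k => n /ltnW kn; exists y; split => //; apply: hG kn _ Hky.
Qed.

Lemma finish (X : topologicalType) (p : X) (H G : nat -> set X) :
  (forall n, G n `<=` \bigcup_k H k) ->
  (exists f : omega1 -> X, (forall y, phiG p G y (f y)) /\ omega1_continuous f) ->
  exists u : nat -> X,
    (forall n, (\bigcup_k H k) (u n)) /\ u @ \oo --> p.
Proof.
move=> sG [f [sf cf]]; exists (fun n => f (Some n)); split.
  by move=> n; apply: sG; apply: (sf (Some n)).
by have := sf None => /= <-; apply: cont_seq.
Qed.

Theorem mainTheorem13 (X : topologicalType) (hT1 : accessible_space X)
  (p : X) (H : nat -> set X) :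
  closure (\bigcup_n H n) p ->
  (strongly_L_selective X \/ (L_selective X /\ forall n, closed (H n))) ->
  exists u : nat -> X,
    (forall n, (\bigcup_k H k) (u n)) /\ u @ \oo --> p.
Proof.
move=> cl [sel|[sel cH]].
  pose G := fun _ : nat => \bigcup_k H k.
  have ne : forall y, phiG p G y !=set0.
    case=> [n|] /=; last by exists p.
    have [x [hx _]] := cl setT filterT; by exists x.
  have ls : omega1_lsc (phiG p G).
    by apply: (@lsc_phiG _ p H) => // k n _ x hx; exists k.
  exact: (@finish _ p H G (fun n x hx => hx) (sel (phiG p G) ne ls)).
have [m [x Hmx]] : exists m, H m !=set0.
  have [x [[m _ hx] _]] := cl setT filterT; by exists m; exists x.
pose G := fun n : nat => \bigcup_(k in `I_(maxn n m).+1) H k.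
have sG : forall n, G n `<=` \bigcup_k H k by move=> n y [k _ hk]; exists k.
have ne : forall y, phiG p G y !=set0.
  case=> [n|] /=; last by exists p.
  by exists x, m => //=; rewrite ltnS leq_maxr.
have cG : forall y, closed (phiG p G y).
  case=> [n|] /=; last by apply: accessible_closed_set1.
  by apply: closed_bigcup => //; apply: finite_II.
have ls : omega1_lsc (phiG p G).
  apply: (@lsc_phiG _ p H) => // k n kn y hy; exists k => //=.
  by rewrite ltnS (leq_trans kn) // leq_maxl.
exact: (@finish _ p H G sG (sel (phiG p G) ne cG ls)).
Qed.
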